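(* Let $n>k\geq 1$, $r=n-k$, and for $i\in[m]$ let $1\leq h_i\leq n-k$ and $k\leq d_i\leq n-h_i$ be integers with $h_i\mid (d_i-k)$. Put $s_i=\frac{d_i-k+h_i}{h_i}$, where the pairs are indexed so that $s_1\leq s_2\leq\cdots\leq s_m$; let $s=\mathrm{lcm}(s_1,\ldots,s_{m-1})$ (with $s=1$ if $m=1$) and $\ell=s\cdot s_m^n$. Let $F$ be a finite field with $|F|\geq s_m n$ and let $\lambda_{i,j}$, $i\in[n]$, $j\in[0,s_m-1]$, be $s_m n$ distinct elements of $F$. Let $\mathcal{C}_2$ be the set of all $(\bm c_1,\ldots,\bm c_n)$ with $\bm c_i=(c_{i,0},\ldots,c_{i,\ell-1})\in F^\ell$ satisfying $$\sum_{i=1}^n \lambda_{i,a_i}^{t-1} c_{i,(a,b)}=0\quad\text{for all } a\in[0,s_m^n-1],\ b\in[0,s-1],\ t\in[r].$$ Then $\mathcal{C}_2$ is an $(n,k,\ell)$ MDS array code satisfying the $(h_i,d_i)$-optimal repair property for every $i\in[m]$ simultaneously.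
   Context: Notation: $[n]=\{1,\ldots,n\}$, $[i,j]=\{i,\ldots,j\}$. Each $\tau\in[0,\ell-1]$ is written uniquely as $\tau=b\cdot s_m^n+\sum_{i=1}^n a_i s_m^{i-1}$ with $b\in[0,s-1]$, $a_i\in[0,s_m-1]$; we write $a=(a_1,\ldots,a_n)=\sum_i a_i s_m^{i-1}$ and $\tau=(a,b)$, so $c_{i,(a,b)}=c_{i,\tau}$. An $(n,k,\ell)$ MDS array code over $F$ is an $F$-linear set of vectors $(\bm c_1,\ldots,\bm c_n)$, $\bm c_i\in F^\ell$ (node $i$ stores $\bm c_i$), of dimension $k\ell$, such that any $k$ coordinates $\bm c_i$ determine the codeword. For $1\leq h\leq n-k$, $k\leq d\leq n-h$, the $(h,d)$-optimal repair property means: for every $h$-subset $\mathcal{H}\subseteq[n]$ and every $d$-subset $\mathcal{R}\subseteq[n]\setminus\mathcal{H}$, each helper $j\in\mathcal{R}$ can send $\beta=\frac{h\ell}{d-k+h}$ symbols of $F$ computed from $\bm c_j$ such that from these $\frac{dh\ell}{d-k+h}$ symbols in total all $\bm c_i$, $i\in\mathcal{H}$, are determined, for every codeword (equality in the cut-set bound). *)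

(* Defs.v *)
From HB Require Import structures.
From mathcomp Require Import all_boot all_order all_algebra.
Set Implicit Arguments. Unset Strict Implicit. Unset Printing Implicit Defensive.
Import GRing.Theory.
Local Open Scope ring_scope.

(* A codeword is a matrix c : 'M[F]_(n, ell); node i (0-based) stores row i c. *)

Definition MDS_array_code (F : fieldType) (n k ell : nat)
    (C : 'M[F]_(n, ell) -> Prop) : Prop :=
  (exists V : {vspace 'M[F]_(n, ell)},
      (forall c, c \in V <-> C c) /\ \dim V = (k * ell)%N) /\
  (forall S : {set 'I_n}, #|S| = k ->
     forall c c', C c -> C c' ->
       (forall i, i \in S -> row i c = row i c') -> c = c').

Definition optimal_repair (F : fieldType) (n k ell h d : nat)
    (C : 'M[F]_(n, ell) -> Prop) : Prop :=
  ((d - k + h) %| h * ell)%N /\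
  forall H R : {set 'I_n}, #|H| = h -> #|R| = d -> [disjoint H & R] ->
    exists f : 'I_n -> 'rV[F]_ell -> 'rV[F]_(h * ell %/ (d - k + h)),
      forall c c', C c -> C c' ->
        (forall j, j \in R -> f j (row j c) = f j (row j c')) ->
        forall i, i \in H -> row i c = row i c'.

(* s_i = (d_i - k + h_i) / h_i  (indices i = 0 .. m-1) *)
Definition s_of (k : nat) (h d : nat -> nat) (i : nat) : nat :=
  ((d i - k + h i) %/ h i)%N.

Definition s_lcm (k m : nat) (h d : nat -> nat) : nat :=
  \big[lcmn/1%N]_(i < m.-1) s_of k h d i.

Definition s_last (k m : nat) (h d : nat -> nat) : nat := s_of k h d m.-1.

Definition ell_of (n k m : nat) (h d : nat -> nat) : nat :=
  (s_lcm k m h d * (s_last k m h d) ^ n)%N.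

(* For tau = b * sm^n + a with a = sum_i a_i sm^i (0-based i), the digit a_i. *)
Definition digit (sm n : nat) (tau i : nat) : nat :=
  ((tau %% sm ^ n) %/ sm ^ i %% sm)%N.

(* The code C_2: for all tau = (a,b) and t in [r] (0-based exponent t-1),
   sum_i lambda_{i, a_i}^(t-1) c_{i,tau} = 0. *)
Definition C2 (F : fieldType) (n k m : nat) (h d : nat -> nat)
    (lambda : nat -> nat -> F)
    (c : 'M[F]_(n, ell_of n k m h d)) : Prop :=
  forall (tau : 'I_(ell_of n k m h d)) (t : 'I_(n - k)),
    \sum_(i < n) (lambda i (digit (s_last k m h d) n tau i)) ^+ t * c i tau = 0.

Arguments MDS_array_code F n k ell C : clear implicits.
Arguments optimal_repair F n k ell h d C : clear implicits.
Arguments C2 F n k m h d lambda c : clear implicits.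

(* Main.v *)
Require Import Defs.
From HB Require Import structures.
From mathcomp Require Import all_boot all_order all_algebra.
From mathcomp Require Import zify.
Import GRing.Theory.
Local Open Scope ring_scope.


Lemma vander_lemma (F : fieldType) (I : finType) (r : nat) (z y : I -> F)
    (Z : seq F) :
  (size Z <= r)%N -> (forall p, y p != 0 -> z p \in Z) ->
  (forall t, (t < r)%N -> \sum_p z p ^+ t * y p = 0) ->
  forall w, \sum_(p | z p == w) y p = 0.
Proof.
move=> szZ supp E w.
case wZ: (w \in Z); last first.
  apply: big1 => p /eqP zw; apply/eqP; apply: contraT => /supp.
  by rewrite zw wZ.
set P := \prod_(v <- [seq v <- Z | v != w]) ('X - v%:P).
have szP : (size P <= r)%N.
  rewrite size_prod_XsubC size_filter.
  have := count_predC (fun v => v != w) Z.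
  have : (0 < count (predC (fun v => v != w)) Z)%N.
    by rewrite -has_count; apply/hasP; exists w => //=; rewrite negbK.
  move=> A B; apply: leq_trans szZ; rewrite -B -addn1 leq_add2l; exact: A.
have E1 : \sum_p P.[z p] * y p = 0.
  under eq_bigr do rewrite horner_coef mulr_suml.
  rewrite exchange_big /=; apply: big1 => t _.
  under eq_bigr do rewrite -mulrA.
  rewrite -mulr_sumr E ?mulr0 //.
  exact: leq_trans (ltn_ord t) szP.
have E2 : \sum_p P.[z p] * y p = P.[w] * \sum_(p | z p == w) y p.
  rewrite (bigID (fun p => z p == w)) /= big_distrr /=.
  rewrite [X in _ + X]big1 ?addr0.
    by apply: eq_bigr => p /eqP ->.
  move=> p zpw.
  have [->|/supp zZ] := eqVneq (y p) 0; first by rewrite mulr0.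
  apply/eqP; rewrite mulf_eq0; apply/orP; left.
  apply/eqP/rootP; rewrite /P root_prod_XsubC mem_filter zpw.
  exact: zZ.
have Pw : P.[w] != 0.
  have : ~~ root P w by rewrite /P root_prod_XsubC mem_filter eqxx.
  by [].
by move: E1; rewrite E2 => /eqP; rewrite mulf_eq0 (negbTE Pw) => /eqP.
Qed.

Lemma off_rec (sm x y : nat) : (x < sm)%N -> (y < sm)%N ->
  ((x + (y + sm - x) %% sm) %% sm = y)%N.
Proof.
move=> xs ys.
case: (leqP x y) => xy.
  have -> : (y + sm - x = 1 * sm + (y - x))%N by lia.
  rewrite modnMDl (@modn_small (y - x)); last by lia.
  rewrite subnKC // modn_small //.
have -> : ((y + sm - x) %% sm = y + sm - x)%N by rewrite modn_small; lia.
have -> : (x + (y + sm - x) = 1 * sm + y)%N by lia.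
by rewrite modnMDl modn_small.
Qed.

Lemma off_inj (sm x x' y : nat) : (x < sm)%N -> (x' < sm)%N -> (y < sm)%N ->
  ((y + sm - x) %% sm = (y + sm - x') %% sm)%N -> x = x'.
Proof.
move=> xs x's ys E.
have h1 := @off_rec sm x y xs ys; have h2 := @off_rec sm x' y x's ys.
rewrite E in h1.
have : (x == x' %[mod sm])%N.
  by rewrite -(eqn_modDr ((y + sm - x') %% sm)) h1 h2.
by rewrite !modn_small // => /eqP.
Qed.

Lemma b_inj (sg sm x b b' : nat) : (0 < sg)%N -> (sg <= sm)%N -> (x < sm)%N ->
  ((b * sm + x) %/ sg = (b' * sm + x) %/ sg)%N -> b = b'.
Proof.
move=> sg0 sgsm xs.
wlog: b b' / (b <= b')%N.
  move=> W E; case: (leqP b b') => bb; first exact: W.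
  by apply/esym; apply: W => //; exact: ltnW.
rewrite leq_eqVlt => /orP [/eqP //|bb] E.
have : (((b * sm + x) + sg) %/ sg <= (b' * sm + x) %/ sg)%N.
  by apply: leq_div2r; nia.
rewrite divnDr // divnn sg0 E; lia.
Qed.

Lemma digits_inj (sm n A B : nat) : (0 < sm)%N -> (A < sm ^ n)%N -> (B < sm ^ n)%N ->
  (forall j, (j < n)%N -> A %/ sm ^ j %% sm = B %/ sm ^ j %% sm)%N -> A = B.
Proof.
move=> sm0; elim: n A B => [|n IH] A B.
  by rewrite expn0 !ltnS !leqn0 => /eqP -> /eqP ->.
move=> An Bn E.
rewrite (divn_eq A sm) (divn_eq B sm).
have E0 := E 0%N isT; rewrite !expn0 !divn1 in E0.
rewrite E0; congr (_ * _ + _)%N.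
apply: IH.
- by rewrite ltn_divLR // -expnSr.
- by rewrite ltn_divLR // -expnSr.
move=> j jn.
by rewrite -!divnMA -expnS; apply: E.
Qed.


Lemma C2_det (F : fieldType) (n k m : nat) (h d : nat -> nat)
    (lambda : nat -> nat -> F) :
  (0 < s_last k m h d)%N ->
  (forall i1 i2 j1 j2, (i1 < n)%N -> (i2 < n)%N ->
     (j1 < s_last k m h d)%N -> (j2 < s_last k m h d)%N ->
     lambda i1 j1 = lambda i2 j2 -> i1 = i2 /\ j1 = j2) ->
  forall S : {set 'I_n}, #|S| = k ->
  forall c c', C2 F n k m h d lambda c -> C2 F n k m h d lambda c' ->
    (forall i, i \in S -> row i c = row i c') -> c = c'.
Proof.
move=> sm0 linj S cS c c' Cc Cc' Ec.
apply/matrixP => i tau; apply/eqP; rewrite -subr_eq0; apply/eqP.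
set sm := s_last k m h d.
pose z := fun j : 'I_n => lambda j (digit sm n tau j).
pose y := fun j : 'I_n => c j tau - c' j tau.
have zinj : forall j j', z j = z j' -> j = j'.
  move=> j j' /linj [] //; try exact: ltn_ord; try exact: ltn_pmod.
  by move=> /val_inj.
have := @vander_lemma F 'I_n (n - k) z y [seq z j | j <- enum (~: S)].
move=> /(_ _ _ _ (z i)).
have -> : \sum_(p | z p == z i) y p = y i.
  rewrite (big_pred1 i) // => p; apply/eqP/eqP => [/zinj|->] //.
apply.
- rewrite size_map -cardE; have := cardsC S; rewrite card_ord cS.
  move: #|~: S| => a; lia.
- move=> p; rewrite /y subr_eq0 => ne; apply: map_f; rewrite mem_enum inE.
  apply: contra ne => pS.
  by have := congr1 (fun M : 'rV[F]_(ell_of n k m h d) => M ord0 tau) (Ec p pS); rewrite !mxE => ->.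
- move=> t tr.
  under eq_bigr do rewrite /y mulrBr.
  rewrite sumrB.
  by rewrite (Cc tau (Ordinal tr)) (Cc' tau (Ordinal tr)) subr0.
Qed.


Lemma MDS_part (F : fieldType) (n k m : nat) (h d : nat -> nat)
    (lambda : nat -> nat -> F) :
  (k <= n)%N ->
  (0 < s_last k m h d)%N ->
  (forall i1 i2 j1 j2, (i1 < n)%N -> (i2 < n)%N ->
     (j1 < s_last k m h d)%N -> (j2 < s_last k m h d)%N ->
     lambda i1 j1 = lambda i2 j2 -> i1 = i2 /\ j1 = j2) ->
  MDS_array_code F n k (ell_of n k m h d) (C2 F n k m h d lambda).
Proof.
move=> kn sm0 linj.
split; last exact: C2_det.
set l := ell_of n k m h d.
set sm := s_last k m h d.
pose phi := fun c : 'M[F]_(n, l) =>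
  \matrix_(t < n - k, tau < l) \sum_(i < n) lambda i (digit sm n tau i) ^+ t * c i tau.
have phiL : linear phi.
  move=> a u v; apply/matrixP => t tau; rewrite !mxE mulr_sumr -big_split.
  by apply: eq_bigr => i _; rewrite !mxE mulrDr mulrCA.
pose phiM := GRing.isLinear.Build _ _ _ _ phi phiL.
pose phiF : {linear _ -> _} := HB.pack phi phiM.
pose rho := fun c : 'M[F]_(n, l) =>
  \matrix_(i < k, tau < l) c (widen_ord kn i) tau.
have rhoL : linear rho.
  by move=> a u v; apply/matrixP => i tau; rewrite !mxE.
pose rhoM := GRing.isLinear.Build _ _ _ _ rho rhoL.
pose rhoF : {linear _ -> _} := HB.pack rho rhoM.
pose Phi := linfun phiF.
pose Rho := linfun rhoF.
have memV : forall c, c \in lker Phi <-> C2 F n k m h d lambda c.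
  move=> c; rewrite memv_ker lfunE /=; split.
    by move=> /eqP E tau t; have := congr1 (fun M : 'M[F]_(n - k, l) => M t tau) E; rewrite !mxE.
  by move=> C; apply/eqP/matrixP => t tau; rewrite !mxE C.
exists (lker Phi); split => //.
have capV : (lker Phi :&: lker Rho = 0)%VS.
  apply/vspaceP => c; rewrite memv_cap memv0 !memv_ker.
  apply/andP/eqP => [[]|->]; last by rewrite !linear0 eqxx.
  rewrite !lfunE /= => C1 /eqP R0.
  have C1' : C2 F n k m h d lambda c by apply/memV; rewrite memv_ker lfunE.
  have C0 : C2 F n k m h d lambda 0.
    by move=> tau t; apply: big1 => i _; rewrite mxE mulr0.
  apply: (@C2_det F n k m h d lambda sm0 linj [set widen_ord kn i | i in 'I_k]) => //.
    rewrite card_imset ?card_ord // => a b E; apply: val_inj; exact: (congr1 val E).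
  move=> j /imsetP [i _ ->]; apply/rowP => tau.
  by have := congr1 (fun M : 'M[F]_(k, l) => M i tau) R0; rewrite !mxE.
have d1 := limg_dim_eq capV.
have d2 : (\dim (Rho @: lker Phi) <= k * l)%N.
  by rewrite -[(k * l)%N](dim_matrix F) -dimvf dimvS // subvf.
have d3 := limg_ker_dim Phi fullv.
have d4 : (\dim (Phi @: fullv) <= (n - k) * l)%N.
  by rewrite -[((n - k) * l)%N](dim_matrix F) -dimvf dimvS // subvf.
rewrite capfv dimvf dim_matrix in d3.
have d5 : ((n - k) * l = n * l - k * l)%N by rewrite mulnBl.
rewrite d5 in d4.
have d6 : (k * l <= n * l)%N by rewrite leq_mul2r kn orbT.
have d3' : (\dim (lker Phi) + \dim (Phi @: fullv) = n * l)%N := d3.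
move: d1 d2 d3' d4 d6.
move: (\dim (lker Phi)) (\dim (Rho @: lker Phi)) (\dim (Phi @: fullv)) (k * l)%N (n * l)%N.
lia.
Qed.


Lemma repair_part (F : fieldType) (n k m : nat) (h d : nat -> nat)
    (lambda : nat -> nat -> F) :
  (1 <= k)%N -> (k < n)%N -> (1 <= m)%N ->
  (forall i, (i < m)%N ->
     [/\ (1 <= h i)%N, (h i <= n - k)%N, (k <= d i)%N, (d i <= n - h i)%N
       & (h i %| d i - k)%N]) ->
  (forall i j, (i <= j)%N -> (j < m)%N -> (s_of k h d i <= s_of k h d j)%N) ->
  (forall i1 i2 j1 j2, (i1 < n)%N -> (i2 < n)%N ->
     (j1 < s_last k m h d)%N -> (j2 < s_last k m h d)%N ->
     lambda i1 j1 = lambda i2 j2 -> i1 = i2 /\ j1 = j2) ->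
  forall i, (i < m)%N ->
     optimal_repair F n k (ell_of n k m h d) (h i) (d i) (C2 F n k m h d lambda).
Proof.
move=> k1 kn m1 Hhd Hsort linj i im.
have [h1 hr kd dn hdvd] := Hhd i im.
have sof_gt0 : forall j, (j < m)%N -> (0 < s_of k h d j)%N.
  move=> j jm; have [? ? ? ? ?] := Hhd j jm.
  by rewrite /s_of divn_gt0; lia.
set sm := s_last k m h d.
set s := s_lcm k m h d.
set sg := s_of k h d i.
set l := ell_of n k m h d.
have sm0 : (0 < sm)%N by apply: sof_gt0; lia.
have sg0 : (0 < sg)%N by apply: sof_gt0.
have sgsm : (sg <= sm)%N by apply: Hsort; lia.
have sgh : (d i - k + h i = h i * sg)%N.
  by rewrite /sg /s_of mulnC divnK // dvdn_add.
have sgdiv : (sg %| s * sm)%N.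
  case: (ltnP i m.-1) => [lt|ge].
    apply: dvdn_mulr; rewrite /s /s_lcm.
    exact: (biglcmn_sup (Ordinal lt)).
  have -> : sg = sm by rewrite /sg /sm /s_last; congr s_of; lia.
  exact: dvdn_mull.
have ln : l = (s * sm * sm ^ n.-1)%N.
  by rewrite /l /ell_of -mulnA -expnS prednK //; lia.
set Q := (s * sm %/ sg)%N.
have betaE : (h i * l %/ (d i - k + h i) = Q * sm ^ n.-1)%N.
  by rewrite sgh divnMl; last lia; rewrite ln -divn_mulAC.
split.
  by rewrite sgh dvdn_pmul2l; last lia; rewrite ln dvdn_mulr.
move=> H R cH cR dHR.
have [i1 i1H] : exists i1, i1 \in H.
  by apply/set0Pn; rewrite -card_gt0 cH.
pose dig (tau : 'I_l) (j : nat) := digit sm n tau j.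
pose off (tau : 'I_l) (j : nat) := ((dig tau j + sm - dig tau i1) %% sm)%N.
pose a' (tau : 'I_l) (j : 'I_n) := if j \in H then off tau j else dig tau j.
pose Pv (tau : 'I_l) := (tau %/ sm ^ n * sm + dig tau i1)%N.
have diglt : forall tau j, (dig tau j < sm)%N by move=> tau j; apply: ltn_pmod.
have a'lt : forall tau j, (a' tau j < sm)%N.
  by move=> tau j; rewrite /a'; case: ifP => _; [apply: ltn_pmod | apply: diglt].
have qlt : forall tau : 'I_l, (Pv tau %/ sg < Q)%N.
  move=> tau; rewrite ltn_divLR // /Q divnK //.
  have : (tau %/ sm ^ n < s)%N.
    by rewrite ltn_divLR ?expn_gt0 ?sm0 //; have := ltn_ord tau; rewrite {2}/l /ell_of.
  move=> bs; have := diglt tau i1; rewrite /Pv.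
  have : ((tau %/ sm ^ n).+1 * sm <= s * sm)%N by rewrite leq_mul2r bs orbT.
  move: (tau %/ sm ^ n)%N (dig tau i1) => b x; rewrite mulSn; lia.
pose KT := ({ffun {j : 'I_n | j != i1} -> 'I_sm} * 'I_Q)%type.
pose key (tau : 'I_l) : KT :=
  ([ffun j => Ordinal (a'lt tau (val j))], Ordinal (qlt tau)).
have cardKT : #|{: KT}| = (h i * l %/ (d i - k + h i))%N.
  rewrite card_prod card_ffun card_sig cardC1 !card_ord betaE mulnC.
  by [].
set beta := (h i * l %/ (d i - k + h i))%N.
pose keyo (tau : 'I_l) : 'I_beta := cast_ord cardKT (enum_rank (key tau)).
pose f := fun (j : 'I_n) (v : 'rV[F]_l) =>
  \row_(g < beta) \sum_(tau < l | keyo tau == g) v ord0 tau.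
exists f.
have off_i1 : forall tau, off tau i1 = 0%N.
  by move=> tau; rewrite /off addKn modnn.
have dig_rec : forall tau j, dig tau j = ((dig tau i1 + off tau j) %% sm)%N.
  by move=> tau j; rewrite /off off_rec.
have Pv_mod : forall tau, (Pv tau %% sm = dig tau i1)%N.
  by move=> tau; rewrite /Pv modnMDl modn_small.
have keyE : forall tau tau', keyo tau = keyo tau' ->
    (forall j : 'I_n, j != i1 -> a' tau j = a' tau' j) /\ (Pv tau %/ sg = Pv tau' %/ sg)%N.
  move=> tau tau' /cast_ord_inj /enum_rank_inj [E1 E2]; split; last first.
    by [].
  move=> j jn.
  have := congr1 (fun g : {ffun {j : 'I_n | j != i1} -> 'I_sm} => val (g (exist _ j jn))) E1.
  by rewrite !ffunE.
have i1Hn : forall j : 'I_n, j \notin H -> j != i1.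
  by move=> j; apply: contraNneq => ->.
have G1 : forall tau tau', keyo tau = keyo tau' -> forall j : 'I_n, j \notin H ->
    dig tau j = dig tau' j.
  move=> tau tau' /keyE [A _] j jH.
  by have := A j (i1Hn j jH); rewrite /a' (negbTE jH).
have G2 : forall tau tau', keyo tau = keyo tau' -> forall j : 'I_n, j \in H ->
    off tau j = off tau' j.
  move=> tau tau' /keyE [A _] j jH.
  have [->|ji1] := eqVneq j i1; first by rewrite !off_i1.
  by have := A j ji1; rewrite /a' jH.
have G4 : forall tau tau', keyo tau = keyo tau' -> forall i0 : 'I_n, i0 \in H ->
    dig tau i0 = dig tau' i0 -> tau = tau'.
  move=> tau tau' K i0 i0H Ed.
  have E1 : dig tau i1 = dig tau' i1.
    have [<-|i0i1] := eqVneq i0 i1; first by [].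
    have := G2 _ _ K i0 i0H; rewrite /off Ed.
    by apply: off_inj.
  have Ea : forall j : 'I_n, dig tau j = dig tau' j.
    move=> j; case jH: (j \in H); last by apply: G1 => //; rewrite jH.
    by rewrite dig_rec [RHS]dig_rec E1 (G2 _ _ K j jH).
  have Eb : (tau %/ sm ^ n = tau' %/ sm ^ n)%N.
    have [_ B] := keyE _ _ K.
    move: B; rewrite /Pv E1.
    by apply: b_inj => //.
  have Em : (tau %% sm ^ n = tau' %% sm ^ n)%N.
    apply: (@digits_inj sm n) => //; try by apply: ltn_pmod; rewrite expn_gt0 sm0.
    move=> j jn; exact: (Ea (Ordinal jn)).
  by apply: val_inj; rewrite /= (divn_eq tau (sm ^ n)) (divn_eq tau' (sm ^ n)) Eb Em.
move=> c c' Cc Cc' Hf i0 i0H.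
apply/rowP => tau0; rewrite !mxE; apply/eqP; rewrite -subr_eq0; apply/eqP.
set g := keyo tau0.
pose x := fun (j : 'I_n) (tau : 'I_l) => c j tau - c' j tau.
have i0R : i0 \notin R by rewrite (disjointFr dHR i0H).
have hR : forall j, j \in R -> \sum_(tau | keyo tau == g) x j tau = 0.
  move=> j jR; have := congr1 (fun v : 'rV[F]_beta => v ord0 g) (Hf j jR).
  rewrite /f !mxE.
  under eq_bigr do rewrite mxE.
  under [X in _ = X -> _]eq_bigr do rewrite mxE.
  by move=> E; rewrite /x sumrB E subrr.
pose z := fun p : 'I_n * 'I_l => lambda p.1 (dig p.2 p.1).
pose y := fun p : 'I_n * 'I_l =>
  if (keyo p.2 == g) && (p.1 \notin R) then x p.1 p.2 else 0.
pose q := (Pv tau0 %/ sg)%N.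
pose Z := [seq lambda j (((q * sg + e) %% sm + off tau0 j) %% sm)%N
             | j : 'I_n <- enum H, e <- iota 0 sg]
          ++ [seq lambda j (dig tau0 j) | j : 'I_n <- enum (~: (H :|: R))].
have := @vander_lemma F _ (n - k) z y Z _ _ _ (z (i0, tau0)).
have -> : \sum_(p | z p == z (i0, tau0)) y p = x i0 tau0.
  rewrite (bigD1 (i0, tau0)) //= big1 ?addr0.
    by rewrite /y /= eqxx i0R.
  move=> [j tau] /andP [/= /eqP zE ne].
  rewrite /y /=; case: andP => // [[/eqP K jR]].
  have [Ej Ed] : (j : nat) = i0 /\ dig tau j = dig tau0 i0.
    exact: (linj _ _ _ _ (ltn_ord j) (ltn_ord i0) (diglt _ _) (diglt _ _) zE).
  have Ej' : j = i0 by apply: val_inj.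
  subst j.
  have := G4 _ _ (etrans K (erefl g)) i0 i0H Ed => Et.
  by move: ne; rewrite Et eqxx.
apply.
- rewrite size_cat size_allpairs size_map size_iota -!cardE cH.
  have := cardsC (H :|: R).
  rewrite card_ord cardsU (disjoint_setI0 dHR) cards0 cH cR.
  move: #|~: (H :|: R)| => a; lia.
- move=> [j tau]; rewrite /y /=.
  case: andP => [[/eqP K jR] _|]; last by rewrite eqxx.
  rewrite /z /= mem_cat; apply/orP.
  case jH: (j \in H).
    left.
    have -> : dig tau j = (((q * sg + Pv tau %% sg) %% sm + off tau0 j) %% sm)%N.
      have [_ B] := keyE _ _ K.
      by rewrite dig_rec (G2 _ _ K j jH) -Pv_mod /q -B -divn_eq.
    apply: (allpairs_f (fun (j : 'I_n) (e : nat) =>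
              lambda j (((q * sg + e) %% sm + off tau0 j) %% sm)%N)).
      by rewrite mem_enum.
    by rewrite mem_iota /= ltn_pmod.
  right; rewrite (G1 _ _ K j (negbT jH)).
  apply: (map_f (fun j : 'I_n => lambda j (dig tau0 j))).
  by rewrite mem_enum !inE jH (negbTE jR).
- move=> t tr.
  have E0 : \sum_(tau | keyo tau == g) \sum_(j < n) z (j, tau) ^+ t * x j tau = 0.
    apply: big1 => tau _.
    under eq_bigr do rewrite /x mulrBr.
    rewrite sumrB.
    have := Cc tau (Ordinal tr); have := Cc' tau (Ordinal tr).
    by rewrite /z /dig /= => -> ->; rewrite subr0.
  rewrite exchange_big in E0.
  rewrite -[X in _ = X]E0.
  have -> : \sum_p z p ^+ t * y p =
      \sum_(j < n) \sum_(tau < l) z (j, tau) ^+ t * y (j, tau).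
    by rewrite pair_bigA; apply: eq_bigr => [[j tau]] _.
  apply: eq_bigr => j _; rewrite /y.
  case jR: (j \in R).
    rewrite big1 => [|tau _]; last by rewrite (_ : ~~ true = false) // andbF mulr0.
    rewrite (eq_bigr (fun tau => z (j, tau0) ^+ t * x j tau)).
      by rewrite -mulr_sumr hR // mulr0.
    move=> tau /eqP K.
    have -> : z (j, tau) = z (j, tau0).
      by rewrite /z /= (G1 _ _ K) // (disjointFl dHR jR).
    by [].
  rewrite [RHS]big_mkcond; apply: eq_bigr => tau _; rewrite (_ : ~~ false = true) // andbT.
  by case: (keyo tau == g); rewrite ?mulr0.
Qed.

Theorem theorem2 (F : finFieldType) (n k m : nat) (h d : nat -> nat)
    (lambda : nat -> nat -> F) :
  (1 <= k)%N -> (k < n)%N -> (1 <= m)%N ->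
  (forall i, (i < m)%N ->
     [/\ (1 <= h i)%N, (h i <= n - k)%N, (k <= d i)%N, (d i <= n - h i)%N
       & (h i %| d i - k)%N]) ->
  (forall i j, (i <= j)%N -> (j < m)%N -> (s_of k h d i <= s_of k h d j)%N) ->
  (s_last k m h d * n <= #|F|)%N ->
  (forall i1 i2 j1 j2, (i1 < n)%N -> (i2 < n)%N ->
     (j1 < s_last k m h d)%N -> (j2 < s_last k m h d)%N ->
     lambda i1 j1 = lambda i2 j2 -> i1 = i2 /\ j1 = j2) ->
  MDS_array_code F n k (ell_of n k m h d) (C2 F n k m h d lambda) /\
  (forall i, (i < m)%N ->
     optimal_repair F n k (ell_of n k m h d) (h i) (d i) (C2 F n k m h d lambda)).
Proof.
move=> k1 kn m1 Hhd Hsort Fcard linj.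
have sm0 : (0 < s_last k m h d)%N.
  have mm : (m.-1 < m)%N by lia.
  have [? ? ? ? ?] := Hhd _ mm.
  by rewrite /s_last /s_of divn_gt0; lia.
split; first exact: (@MDS_part F n k m h d lambda (ltnW kn) sm0 linj).
exact: repair_part.
Qed.
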